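(* Let $G$ be $\hbar$-perfect and let $G'$ be obtained from $G$ by splitting one vertex $v$, i.e. adding a new vertex $v'$ adjacent to $v$ and to exactly the neighbours of $v$ in $G$. Then $G'$ is $\hbar$-perfect.
   Context: A realization of a graph $G$ on $\{1,\dots,n\}$ is a tuple $(S_1,\dots,S_n)$ of Pauli strings (tensor products of matrices from $\{I,X,Y,Z\}$) of common length with $S_i,S_j$ anticommuting iff $i\sim j$ and commuting otherwise; every graph has one. For $w\in\mathbb{R}^n_{\ge0}$, $\beta(G,w)=\sup_\rho\sum_iw_i\operatorname{tr}(\rho S_i)^2$ over density matrices $\rho$ (independent of the realization), and $\alpha(G,w)=\max\{\sum_{i\in I}w_i: I\text{ independent set of }G\}$. $G$ is $\hbar$-perfect if $\beta(G,w)=\alpha(G,w)$ for all $w\in\mathbb{R}^n_{\ge0}$. *)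

(* Defs.v *)
From HB Require Import structures.
From mathcomp Require Import all_boot all_order all_algebra.
From mathcomp Require Import complex.
From mathcomp Require Import classical_sets reals.
Set Implicit Arguments. Unset Strict Implicit. Unset Printing Implicit Defensive.
Import Order.TTheory GRing.Theory Num.Theory.
Local Open Scope ring_scope.

Definition simple_graph (n : nat) (E : rel 'I_n) : Prop :=
  (forall i, ~~ E i i) /\ (forall i j, E i j = E j i).

(* Splitting vertex v: new vertex ord_max (= n) adjacent to v and to exactly
   the neighbours of v; old vertices keep their adjacencies. *)
Definition split_graph (n : nat) (E : rel 'I_n) (v : 'I_n) : rel 'I_n.+1 :=
  fun a b =>
    match unlift ord_max a, unlift ord_max b with
    | Some i, Some j => E i j
    | None, Some j => (j == v) || E v j
    | Some i, None => (i == v) || E i v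
    | None, None => false
    end.

Inductive pauli := PI | PX | PY | PZ.

Section Pauli.
Variable R : rcfType.
Local Open Scope complex_scope.

(* entry (a,b) of the 2x2 Pauli matrix, rows/columns indexed by bits *)
Definition pauli_entry (p : pauli) (a b : bool) : R[i] :=
  match p with
  | PI => if a == b then 1 else 0
  | PX => if a != b then 1 else 0
  | PY => match a, b with
          | false, true => - 'i
          | true, false => 'i
          | _, _ => 0
          end
  | PZ => match a, b with
          | false, false => 1
          | true, true => -1
          | _, _ => 0
          end
  end.

Definition bit (k : nat) (a : nat) : bool := odd (a %/ 2 ^ k).

(* the matrix of the Pauli string s_0 (x) s_1 (x) ... (x) s_{m-1}
   (Kronecker product, basis of C^{2^m} indexed by bit strings) *)
Definition pauli_string (m : nat) (s : 'I_m -> pauli) : 'M[R[i]]_(2 ^ m) :=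
  \matrix_(a, b) \prod_(k < m) pauli_entry (s k) (bit k a) (bit k b).

Definition adjmx (p q : nat) (A : 'M[R[i]]_(p, q)) : 'M[R[i]]_(q, p) :=
  map_mx Num.conj A^T.

Definition density (d : nat) (rho : 'M[R[i]]_d) : Prop :=
  adjmx rho = rho /\
  (forall v : 'cV[R[i]]_d, 0 <= (adjmx v *m rho *m v) 0 0) /\
  \tr rho = 1.
End Pauli.

Definition realization (R : rcfType) (n m : nat) (E : rel 'I_n)
    (S : 'I_n -> 'I_m -> pauli) : Prop :=
  forall i j : 'I_n,
    if E i j then
      pauli_string R (S i) *m pauli_string R (S j)
        = - (pauli_string R (S j) *m pauli_string R (S i))
    else
      pauli_string R (S i) *m pauli_string R (S j)
        = pauli_string R (S j) *m pauli_string R (S i).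

(* beta(G,w) computed with the realization S: supremum over density matrices
   of sum_i w_i tr(rho S_i)^2 (tr(rho S_i) is real, we take its real part) *)
Definition beta (R : realType) (n m : nat) (S : 'I_n -> 'I_m -> pauli)
    (w : 'I_n -> R) : R :=
  sup [set x : R | exists rho : 'M[R[i]]_(2 ^ m),
        density rho /\
        x = \sum_(i < n) w i * (complex.Re (\tr (rho *m pauli_string R (S i)))) ^+ 2].

Definition independent (n : nat) (E : rel 'I_n) (I : {set 'I_n}) : bool :=
  [forall i in I, forall j in I, ~~ E i j].

Definition alpha (R : realType) (n : nat) (E : rel 'I_n) (w : 'I_n -> R) : R :=
  \big[Num.max/0]_(I : {set 'I_n} | independent E I) \sum_(i in I) w i.

(* hbar-perfect: beta = alpha for every nonnegative weight vector; beta is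
   computed with an (arbitrary) realization, which is known not to matter. *)
Definition hbar_perfect (R : realType) (n : nat) (E : rel 'I_n) : Prop :=
  forall (m : nat) (S : 'I_n -> 'I_m -> pauli), realization R E S ->
  forall w : 'I_n -> R, (forall i, 0 <= w i) -> beta S w = alpha E w.

(* Main.v *)
Require Import Defs.
From mathcomp Require Import all_boot all_order all_algebra.
From mathcomp Require Import complex.
From mathcomp Require Import classical_sets reals.
From mathcomp Require Import boolp ring lra.
Set Implicit Arguments. Unset Strict Implicit. Unset Printing Implicit Defensive.
Import Order.TTheory GRing.Theory Num.Theory.

Module PP.
Local Open Scope ring_scope.

Lemma bit0E a : bit 0 a = odd a.
Proof. by rewrite /bit expn0 divn1. Qed.

Lemma bitSE k a : bit k.+1 a = bit k (a %/ 2).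
Proof. by rewrite /bit expnS divnMA. Qed.

Lemma bits_inj m a c : (a < 2 ^ m)%N -> (c < 2 ^ m)%N ->
  (forall k, (k < m)%N -> bit k a = bit k c) -> a = c.
Proof.
elim: m a c => [|m IH] a c.
  by rewrite expn0 !ltnS !leqn0 => /eqP -> /eqP ->.
move=> ha hc hb.
have h0 := hb 0%N (ltn0Sn _); rewrite !bit0E in h0.
have e : (a %/ 2 = c %/ 2)%N.
  apply: IH.
  - by rewrite ltn_divLR // -expnSr.
  - by rewrite ltn_divLR // -expnSr.
  by move=> k hk; rewrite -!bitSE; apply: hb.
by rewrite (divn_eq a 2) (divn_eq c 2) e !modn2 h0.
Qed.

Section Sum.
Variable C : comNzRingType.

Lemma sum_double (N : nat) (g : nat -> C) :
  \sum_(b < (2 * N)%N) g b = \sum_(q < N) (g (2 * q)%N + g (2 * q).+1).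
Proof.
rewrite -(big_mkord xpredT g) -(big_mkord xpredT (fun q => g (2 * q)%N + g (2 * q).+1)); elim: N => [|N IH]; first by rewrite !big_geq.
rewrite mulnS !addSn add0n !big_nat_recr //=.
by rewrite IH addrA.
Qed.

Lemma bitsum (m : nat) (F : nat -> bool -> C) :
  \sum_(b < 2 ^ m) \prod_(k < m) F k (bit k b)
  = \prod_(k < m) (F k false + F k true).
Proof.
elim: m F => [|m IH] F.
  by rewrite expn0 big_ord1 !big_ord0.
rewrite expnS (sum_double _ (fun b => \prod_(k < m.+1) F k (bit k b))) big_ord_recl.
rewrite -(IH (fun k => F k.+1)) mulr_sumr; apply: eq_bigr => q _.
rewrite !big_ord_recl !bit0E /= oddM /=.
rewrite mulrDl; congr (_ + _); congr (_ * _); apply: eq_bigr => k _;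
  rewrite /bump leq0n add1n bitSE; congr (F _ (bit _ _)).
- by rewrite mulKn.
- by rewrite -addn1 mulnC divnMDl // divn_small // addn0.
Qed.
End Sum.

Section Pauli.
Variable R : rcfType.
Local Notation C := (R[i]).

Lemma conj_i : Num.conj ('i%C : C) = - 'i%C.
Proof. exact: conjCi. Qed.

Lemma pauli_conj p a b :
  Num.conj (pauli_entry R p a b) = pauli_entry R p b a.
Proof.
case: p; case: a; case: b => /=; rewrite ?rmorphN ?rmorph0 ?rmorph1 ?conjCi ?opprK //.
by apply/eqP; rewrite eqr_oppLR; apply/eqP; exact: conj_i.
Qed.

Lemma pauli_sq p x z :
  pauli_entry R p x false * pauli_entry R p false z
  + pauli_entry R p x true * pauli_entry R p true z = (x == z)%:R.
Proof.
case: p; case: x; case: z => /=; rewrite ?mulr0 ?mul0r ?mulr1 ?mul1r ?addr0 ?add0r ?mulrNN ?opprK //.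
all: by apply/eqP; rewrite eq_complex /=; simpc; rewrite ?mulr1 ?mul1r ?mulr0 ?subr0 ?opprK ?eqxx.
Qed.

Lemma pauli_herm m (s : 'I_m -> pauli) :
  adjmx (pauli_string R s) = pauli_string R s.
Proof.
apply/matrixP => a b; rewrite /adjmx !mxE rmorph_prod; apply: eq_bigr => k _.
exact: pauli_conj.
Qed.

Lemma pauli_square m (s : 'I_m -> pauli) :
  pauli_string R s *m pauli_string R s = 1%:M.
Proof.
apply/matrixP => a c; rewrite !mxE.
under eq_bigr => b _ do rewrite !mxE -big_split /=.
pose F k x := if insub k is Some k' then
   pauli_entry R (s k') (bit k a) x * pauli_entry R (s k') x (bit k c) else 0.
transitivity (\sum_(b < 2 ^ m) \prod_(k < m) F k (bit k b)).
  apply: eq_bigr => b _; apply: eq_bigr => k _; by rewrite /F valK.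
rewrite bitsum.
transitivity (\prod_(k < m) ((bit k a == bit k c)%:R : R[i])).
  by apply: eq_bigr => k _; rewrite /F valK pauli_sq.
have [->|ne] := eqVneq a c.
  by rewrite big1 // => k _; rewrite eqxx.
have /fintype.existsP[k hk] : [exists k : 'I_m, bit k a != bit k c].
  apply: contraR ne => /fintype.existsPn h; apply/eqP/val_inj.
  apply: (@bits_inj m); try exact: ltn_ord.
  by move=> k hk; apply/eqP; move: (h (Ordinal hk)); rewrite negbK.
by rewrite (bigD1 k) //= (negbTE hk) mul0r.
Qed.
End Pauli.

End PP.
Import PP.

Module RR.
Local Open Scope ring_scope.
Local Open Scope complex_scope.

Section Rot.
Variable R : rcfType.
Local Notation C := (R[i]).
Variable d : nat.
Implicit Types X Y Q : 'M[C]_d.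

Lemma conj_expand (al be : C) Q X :
  (al *: 1%:M - be *: Q) *m X *m (al *: 1%:M + be *: Q) =
  (al * al) *: X + (al * be) *: (X *m Q - Q *m X) - (be * be) *: (Q *m X *m Q).
Proof.
rewrite !(mulmxDl, mulmxDr, mulNmx, mulmxN).
rewrite -!scalemxAl -!scalemxAr !mul1mx !mulmx1 !scalerA ?mulmxA.
rewrite ?scalerN ?scalerBr ?scalerDr ?scalerA.
rewrite (mulrC be al) !addrA; congr (_ - _); exact: addrAC.
Qed.


Lemma adjmxK X : adjmx (adjmx X) = X.
Proof. by apply/matrixP => i j; rewrite /adjmx !mxE conjCK. Qed.

Lemma adjmx_mul X Y : adjmx (X *m Y) = adjmx Y *m adjmx X.
Proof. by rewrite /adjmx trmx_mul map_mxM. Qed.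

Lemma adjmx_lin (a b : C) X Y :
  adjmx (a *: X + b *: Y) = Num.conj a *: adjmx X + Num.conj b *: adjmx Y.
Proof. by apply/matrixP => i j; rewrite /adjmx !mxE rmorphD !rmorphM. Qed.

Lemma adjmx1 : adjmx (1%:M : 'M[C]_d) = 1%:M.
Proof. by apply/matrixP => i j; rewrite /adjmx !mxE eq_sym rmorph_nat. Qed.

Lemma adjmxZ (a : C) X : adjmx (a *: X) = Num.conj a *: adjmx X.
Proof. by apply/matrixP => i j; rewrite /adjmx !mxE rmorphM. Qed.

Lemma adjmx_vec (p q r : nat) (Y : 'M[C]_(p, q)) (Z : 'M[C]_(q, r)) : adjmx (Y *m Z) = adjmx Z *m adjmx Y.
Proof. by rewrite /adjmx trmx_mul map_mxM. Qed.

Lemma tr_conj (U Ud rho X : 'M[C]_d) :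
  \tr (U *m rho *m Ud *m X) = \tr (rho *m (Ud *m X *m U)).
Proof. by rewrite -!mulmxA mxtrace_mulC !mulmxA. Qed.

Lemma conjC_real (x : R) : Num.conj (x%:C : C) = x%:C.
Proof. by apply: conj_Creal; rewrite complex_real. Qed.

Lemma Re_realM (x : R) (z : C) : complex.Re (x%:C * z) = x * complex.Re z.
Proof. by case: z => a b /=; rewrite mul0r subr0. Qed.


Lemma ReD (u v : C) : complex.Re (u + v) = complex.Re u + complex.Re v.
Proof. by case: u; case: v. Qed.

Lemma ReN (u : C) : complex.Re (- u) = - complex.Re u.
Proof. by case: u. Qed.

Lemma realCM (p q : R) : p%:C * q%:C = (p * q)%:C :> C.
Proof. by apply/eqP; rewrite eq_complex /= !mul0r !mulr0 subr0 addr0 !eqxx. Qed.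

Lemma realCV (p : R) : (p%:C)^-1 = (p^-1)%:C :> C.
Proof. exact: (esym (fmorphV (real_complex R) p)). Qed.

Lemma realCN (p : R) : - (p%:C) = (- p)%:C :> C.
Proof. by apply/eqP; rewrite eq_complex /= oppr0 !eqxx. Qed.

Lemma conj_sqrt (x y : R) : exists a b : R,
  a * a - b * b = x /\ a * b + b * a = y.
Proof.
have := sqr_sqrtc (x +i* y)%C; case: (sqrtc _) => a b.
rewrite expr2; simpc; case=> e1 e2; by exists a, b.
Qed.

Lemma rotation (rho A B : 'M[C]_d) :
  density rho -> adjmx A = A -> adjmx B = B -> A *m A = 1%:M -> B *m B = 1%:M ->
  A *m B = - (B *m A) ->
  exists rho', density rho' /\
    (complex.Re (\tr (rho' *m A)))^+2
      = (complex.Re (\tr (rho *m A)))^+2 + (complex.Re (\tr (rho *m B)))^+2 /\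
    forall X, ((A *m X = X *m A /\ B *m X = X *m B) \/
               (A *m X = - (X *m A) /\ B *m X = - (X *m B))) ->
       \tr (rho' *m X) = \tr (rho *m X).
Proof.
move=> [rh1 [rh2 rh3]] hA hB hAA hBB hAB.
set x := complex.Re (\tr (rho *m A)); set y := complex.Re (\tr (rho *m B)).
have [/andP[/eqP x0 /eqP y0]|nz] := boolP ((x == 0) && (y == 0)).
  exists rho; split; first by [].
  split; last by []. by rewrite -/x x0 y0 expr0n addr0.
have [a [b [e1 e2]]] := conj_sqrt x y.
set K := a * a + b * b.
have K2 : K ^+ 2 = x ^+ 2 + y ^+ 2 by rewrite -e1 -e2 /K; ring.
have Kn0 : K != 0.
  apply: contra nz => /eqP K0; apply/andP; split; apply/eqP.
    by move/eqP: K2; rewrite K0 expr0n /= eq_sym paddr_eq0 ?sqr_ge0 // sqrf_eq0 => /andP[/eqP].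
    by move/eqP: K2; rewrite K0 expr0n /= eq_sym paddr_eq0 ?sqr_ge0 // !sqrf_eq0 => /andP[_ /eqP].
have Kpos : 0 < K by rewrite lt0r Kn0 /K addr_ge0 // -expr2 sqr_ge0.
pose Q := A *m B.
have BA : B *m A = - Q by rewrite /Q hAB opprK.
have AQ : A *m Q = B by rewrite /Q mulmxA hAA mul1mx.
have QA : Q *m A = - B by rewrite /Q -mulmxA BA mulmxN /Q mulmxA hAA mul1mx.
have BQ : B *m Q = - A by rewrite {1}/Q mulmxA BA mulNmx /Q -mulmxA hBB mulmx1.
have QQ : Q *m Q = - 1%:M by rewrite {1}/Q -mulmxA BQ mulmxN hAA.
have adjQ : adjmx Q = - Q by rewrite /Q adjmx_mul hA hB BA.
pose al : C := a%:C; pose be : C := b%:C.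
pose U := al *: 1%:M + be *: Q.
pose Ud := al *: 1%:M - be *: Q.
have adjU : adjmx U = Ud.
  by rewrite /U adjmx_lin adjmx1 adjQ !conjC_real /Ud scalerN.
have adjUd : adjmx Ud = U by rewrite -adjU adjmxK.
have exp X : Ud *m X *m U = (al * al) *: X + (al * be) *: (X *m Q - Q *m X) - (be * be) *: (Q *m X *m Q).
  exact: conj_expand.
have kC : al * al + be * be = K%:C by rewrite /al /be /K -!rmorphM -rmorphD.
have comm X : Q *m X = X *m Q -> Ud *m X *m U = K%:C *: X.
  move=> qx; rewrite exp qx subrr scaler0 addr0 -mulmxA QQ mulmxN mulmx1 scalerN opprK.
  by rewrite -scalerDl kC.
have UU : Ud *m U = K%:C *: 1%:M by rewrite -(comm 1%:M) ?mulmx1 ?mul1mx.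
pose rho' := (K%:C)^-1 *: (U *m rho *m Ud).
have trX X : \tr (rho' *m X) = (K%:C)^-1 * \tr (rho *m (Ud *m X *m U)).
  by rewrite /rho' -scalemxAl mxtraceZ tr_conj.
have KC0 : K%:C != 0 :> C by rewrite eq_complex /= negb_and Kn0.
exists rho'; split; [split; [|split] | split].
- rewrite /rho' adjmxZ !adjmx_mul adjUd rh1 adjU fmorphV.
  rewrite mulmxA; congr (_^-1 *: _); exact: conjC_real.
- move=> v.
  rewrite /rho' -scalemxAr -scalemxAl mxE.
  apply: mulr_ge0; first by rewrite invr_ge0 ler0c ltW.
  have := rh2 (Ud *m v); rewrite adjmx_vec adjUd -!mulmxA.
  by rewrite !mulmxA.
- by rewrite -[rho']mulmx1 trX mulmx1 UU -scalemxAr mulmx1 mxtraceZ rh3 mulr1 mulVf.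
- rewrite trX exp AQ QA opprK mulNmx BQ opprK.
  rewrite !mulmxDr !mulmxN -!scalemxAr !mxtraceD ?mxtraceN !mxtraceZ.
  rewrite linearN /= mxtraceZ mulmxDr mxtraceD.
  rewrite /al /be !realCM realCV !mulrDr !ReD ?ReN !Re_realM -/x -/y.
  rewrite -mulNr realCN Re_realM -/x.
  have -> : K^-1 * (a * a * x) + (K^-1 * (a * b * y) + K^-1 * (a * b * y))
     + K^-1 * (- (b * b) * x) = K^-1 * (K ^+ 2).
    by rewrite K2 -e1 -e2 /K; ring.
  by rewrite [K ^+ 2]expr2 mulKf // K2.
- move=> X hX; rewrite trX comm; last first.
    case: hX => [[h1 h2]|[h1 h2]]; rewrite /Q -(mulmxA A B X) h2 ?mulmxN (mulmxA A X B) h1 ?mulNmx ?opprK -mulmxA //.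
  by rewrite -scalemxAr mxtraceZ mulrA mulVf // mul1r.
Qed.

End Rot.

End RR.
Import RR.

Local Open Scope ring_scope.

Definition bval (R : realType) k m (S : 'I_k -> 'I_m -> pauli) (w : 'I_k -> R)
  (rho : 'M[R[i]]_(2 ^ m)) : R :=
  \sum_(i < k) w i * (complex.Re (\tr (rho *m pauli_string R (S i)))) ^+ 2.

Definition bset (R : realType) k m (S : 'I_k -> 'I_m -> pauli) (w : 'I_k -> R) : set R :=
  [set x | exists rho, density rho /\ x = bval S w rho].

Lemma betaE (R : realType) k m (S : 'I_k -> 'I_m -> pauli) (w : 'I_k -> R) :
  beta S w = sup (bset S w).
Proof. by []. Qed.

Lemma alpha_ge (R : realType) n (E : rel 'I_n) (w : 'I_n -> R) (I : {set 'I_n}) :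
  independent E I -> \sum_(i in I) w i <= alpha E w.
Proof.
move=> hI; rewrite /alpha.
have := @le_bigmax_cond _ R _ 0 I (independent E) (fun I => \sum_(i in I) w i) hI.
exact.
Qed.

Lemma alpha_le (R : realType) n (E : rel 'I_n) (w : 'I_n -> R) (c : R) :
  0 <= c -> (forall I, independent E I -> \sum_(i in I) w i <= c) -> alpha E w <= c.
Proof.
move=> c0 h; rewrite /alpha.
have := @bigmax_le _ R _ (index_enum {set 'I_n}) (fun I => \sum_(i in I) w i) 0 c (independent E) c0 h.
exact.
Qed.

Lemma bounded_of_perfect (R : realType) n (E : rel 'I_n) m (S : 'I_n -> 'I_m -> pauli) :
  simple_graph E -> hbar_perfect R E -> realization R E S ->
  forall w : 'I_n -> R, (forall i, 0 <= w i) -> has_ubound (bset S w).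
Proof.
move=> [Eirr _] hp hS w hw.
have hB : forall i, exists B : R, forall rho, density rho ->
    (complex.Re (\tr (rho *m pauli_string R (S i)))) ^+ 2 <= B.
  move=> i; pose e := fun j : 'I_n => (j == i)%:R : R.
  have e0 : forall j, 0 <= e j by move=> j; rewrite /e ler0n.
  have al1 : 1 <= alpha E e.
    have := @alpha_ge R n E e [set i]; rewrite big_set1 /e eqxx; apply.
    by apply/forallP => a; apply/implyP; rewrite inE => /eqP ->;
       apply/forallP => b; apply/implyP; rewrite inE => /eqP ->.
  have hsup : has_sup (bset S e).
    apply: boolp.contrapT => hn; move: (hp m S hS e e0); rewrite betaE sup_out // => h.
    by move: al1; rewrite -h ler10.
  case: hsup => _ [B hB]; exists B => rho hrho; apply: hB; exists rho; split => //.
  rewrite /bval (bigD1 i) //= big1 ?addr0 /e ?eqxx ?mul1r // => j /negbTE ->.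
  by rewrite mul0r.
have [B hBi] : exists B : 'I_n -> R, forall i rho, density rho ->
    (complex.Re (\tr (rho *m pauli_string R (S i)))) ^+ 2 <= B i.
  exists (fun i => xget 0 (fun B => forall rho, density rho ->
    (complex.Re (\tr (rho *m pauli_string R (S i)))) ^+ 2 <= B)).
  move=> i; exact: (xgetPex 0 (hB i)).
exists (\sum_i w i * B i) => x [rho [hrho ->]].
by apply: ler_sum => i _; apply: ler_wpM2l => //; apply: hBi.
Qed.

Lemma sum_lift (R : realType) n (F : 'I_n.+1 -> R) :
  \sum_(j < n.+1) F j = \sum_(i < n) F (lift ord_max i) + F ord_max.
Proof.
rewrite big_ord_recr; congr (_ + _); apply: eq_bigr => i _; congr F.
by apply: val_inj; rewrite /= /bump leqNgt ltn_ord.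
Qed.

Lemma indepP n (E : rel 'I_n) (I : {set 'I_n}) :
  reflect (forall i j, i \in I -> j \in I -> ~~ E i j) (independent E I).
Proof.
apply: (iffP idP).
  by move=> /forallP h i j hi hj; move: (h i); rewrite hi /= => /forallP /(_ j); rewrite hj.
move=> h; apply/forallP => i; apply/implyP => hi; apply/forallP => j; apply/implyP => hj.
exact: h.
Qed.

Lemma inj_sum_le (R : realType) k k' (f : 'I_k -> 'I_k') (g : 'I_k' -> R) :
  injective f -> (forall j, 0 <= g j) -> \sum_i g (f i) <= \sum_j g j.
Proof.
move=> finj g0.
have -> : \sum_i g (f i) = \sum_(i in [set: 'I_k]) g (f i).
  by apply: eq_bigl => i; rewrite inE.
rewrite -(big_imset _ (in2W finj)) /= big_mkcond /=.
by apply: ler_sum => j _; case: ifP.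
Qed.

Section Split.
Variables (R : realType) (n : nat) (E : rel 'I_n) (v : 'I_n).
Hypothesis hsimp : simple_graph E.
Local Notation E' := (split_graph E v).

Lemma EL i j : E' (lift ord_max i) (lift ord_max j) = E i j.
Proof. by rewrite /split_graph !liftK. Qed.
Lemma EML j : E' ord_max (lift ord_max j) = (j == v) || E v j.
Proof. by rewrite /split_graph unlift_none liftK. Qed.
Lemma ELM i : E' (lift ord_max i) ord_max = (i == v) || E i v.
Proof. by rewrite /split_graph unlift_none liftK. Qed.
Lemma EMM : E' ord_max ord_max = false.
Proof. by rewrite /split_graph unlift_none. Qed.

Variable w : 'I_n.+1 -> R.
Hypothesis hw : forall i, 0 <= w i.

Definition wv i := if i == v then Num.max (w (lift ord_max v)) (w ord_max)
                   else w (lift ord_max i).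

Lemma wv0 i : 0 <= wv i.
Proof. by rewrite /wv; case: ifP => _; rewrite ?le_max hw. Qed.

Definition fb := w ord_max <= w (lift ord_max v).
Definition f i : 'I_n.+1 :=
  if fb then lift ord_max i else if i == v then ord_max else lift ord_max i.

Lemma Ef i j : E' (f i) (f j) = E i j.
Proof.
have [Eirr Esym] := hsimp.
rewrite /f; case: fb; first exact: EL.
case: (eqVneq i v) => [->|iv]; case: (eqVneq j v) => [->|jv].
- by rewrite EMM (negbTE (Eirr v)).
- by rewrite EML (negbTE jv).
- by rewrite ELM (negbTE iv).
- exact: EL.
Qed.

Lemma finj : injective f.
Proof.
move=> i j; rewrite /f; case: fb; first exact: lift_inj.
case: (eqVneq i v) => [->|iv]; case: (eqVneq j v) => [->|jv] //.
- by move=> /eqP; rewrite (negbTE (neq_lift _ _)).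
- by move=> /eqP; rewrite eq_sym (negbTE (neq_lift _ _)).
- exact: lift_inj.
Qed.

Lemma wf i : w (f i) = wv i.
Proof.
rewrite /f /wv /fb; case: (eqVneq i v) => [->|iv]; last by case: ifP.
case: ifP => hb; first by rewrite max_l.
by rewrite max_r // ltW // ltNge hb.
Qed.

Lemma alpha_split : alpha E' w = alpha E wv.
Proof.
have [Eirr Esym] := hsimp.
have a0 : forall (k : nat) (F : rel 'I_k) (u : 'I_k -> R), 0 <= alpha F u.
  move=> k F u; have := @alpha_ge R k F u (finset.set0 : {set 'I_k}); rewrite big_set0; apply.
  by apply/indepP => i j; rewrite inE.
apply/eqP; rewrite eq_le; apply/andP; split; apply: alpha_le => // I hI.
- pose J := [set i | (lift ord_max i \in I) || ((i == v) && (ord_max \in I))].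
  have hJ : independent E J.
    apply/indepP => i j; rewrite !inE.
    move/indepP: hI => hI.
    case/orP => [hi|/andP[/eqP -> hm]]; case/orP => [hj|/andP[/eqP -> hm']].
    + by rewrite -EL hI.
    + by move: (hI _ _ hi hm'); rewrite ELM negb_or => /andP[].
    + by move: (hI _ _ hm hj); rewrite EML negb_or => /andP[].
    + by rewrite Eirr.
  apply: le_trans (alpha_ge wv hJ).
  rewrite big_mkcond sum_lift /= [X in _ <= X]big_mkcond /=.
  have -> : (if ord_max \in I then w ord_max else 0) =
            \sum_(i < n) (if (i == v) && (ord_max \in I) then w ord_max else 0).
    rewrite (bigD1 v) //= eqxx big1 ?addr0 // => i /negbTE ->; by [].
  rewrite -big_split /=; apply: ler_sum => i _; rewrite /wv inE.
  case: (eqVneq i v) => [->|iv] /=.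
    case h1: (lift ord_max v \in I); case h2: (ord_max \in I) => /=.
    + by move/indepP: hI => /(_ _ _ h1 h2); rewrite ELM eqxx.
    + by rewrite addr0 le_max lexx.
    + by rewrite add0r le_max lexx orbT.
    + by rewrite addr0.
  by rewrite orbF addr0.
- have -> : \sum_(i in I) wv i = \sum_(j in [set f x | x in I]) w j.
    rewrite big_imset /=; last by move=> x y _ _; apply: finj.
    by apply: eq_bigr => i _; rewrite wf.
  apply: alpha_ge; apply/indepP => a b /imsetP[i hi ->] /imsetP[j hj ->].
  by rewrite Ef; move/indepP: hI; apply.
Qed.

End Split.

Local Open Scope classical_set_scope.
Theorem mainTheorem8 (R : realType) (n : nat) (E : rel 'I_n) (v : 'I_n) :
  simple_graph E -> hbar_perfect R E -> hbar_perfect R (split_graph E v).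
Proof.
move=> hsimp hp m S' hS' w hw.
have [Eirr Esym] := hsimp.
pose P (j : 'I_n.+1) := pauli_string R (S' j).
pose X rho j := (complex.Re (\tr (rho *m P j))) ^+ 2.
have realf : realization R E (fun i => S' (f v w i)).
  by move=> i j; rewrite -(Ef v hsimp w i j); exact: hS'.
have real1 : realization R E (fun i => S' (lift ord_max i)).
  by move=> i j; rewrite -(EL E v i j); exact: hS'.
have wv0' := wv0 v hw.
have bnd1 := bounded_of_perfect hsimp hp real1 wv0'.
have eq1 := hp m _ real1 (wv v w) wv0'.
have eqf := hp m _ realf (wv v w) wv0'.
rewrite (alpha_split v hsimp) betaE.
have cA : forall rho, bval (fun i => S' (f v w i)) (wv v w) rho <= bval S' w rho.
  move=> rho; rewrite /bval.
  under eq_bigr => i _ do rewrite -(wf v w i).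
  apply: (@inj_sum_le R n n.+1 (f v w) (fun j => w j * (complex.Re (\tr (rho *m pauli_string R (S' j)))) ^+ 2)).
    exact: finj.
  by move=> j; rewrite mulr_ge0 // sqr_ge0.
have cB : forall rho, density rho -> bval S' w rho <= alpha E (wv v w).
  move=> rho hrho.
  have hAB : P (lift ord_max v) *m P ord_max = - (P ord_max *m P (lift ord_max v)).
    by have := hS' (lift ord_max v) ord_max; rewrite ELM eqxx.
  have [rho' [hrho' [eqA hX]]] := rotation hrho (pauli_herm _ _) (pauli_herm _ _)
     (pauli_square _ _) (pauli_square _ _) hAB.
  rewrite -eq1 betaE; apply: le_trans (ub_le_sup bnd1 (ex_intro _ rho' (conj hrho' erefl))).
  rewrite /bval sum_lift (bigD1 v) //= [X in _ <= X](bigD1 v) //=.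
  rewrite addrAC lerD //.
    rewrite /wv eqxx -/(P _) -/(P _) -/(X _ _) -/(X _ _) -/(X _ _).
    rewrite /X /P eqA mulrDr lerD // ler_wpM2r ?sqr_ge0 // le_max lexx ?orbT //.
  apply: ler_sum => i iv; rewrite /wv (negbTE iv); apply: ler_wpM2l => //.
  rewrite hX //.
  have h1 := hS' (lift ord_max v) (lift ord_max i).
  have h2 := hS' ord_max (lift ord_max i).
  rewrite EL in h1; rewrite EML (negbTE iv) /= in h2.
  by case: (E v i) h1 h2 => h1 h2; [right | left].
have [[rho0 hr0]|hn] := pselect (exists rho : 'M[R[i]]_(2 ^ m), density rho); last first.
  have e1 : bset S' w = set0.
    by rewrite eqEsubset; split => x // [rho [hr _]]; exfalso; apply: hn; exists rho.
  have e2 : bset (fun i => S' (f v w i)) (wv v w) = set0.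
    by rewrite eqEsubset; split => x // [rho [hr _]]; exfalso; apply: hn; exists rho.
  by rewrite -eqf betaE e1 e2.
have ne : bset S' w !=set0 by exists (bval S' w rho0), rho0.
have ub : ubound (bset S' w) (alpha E (wv v w)) by move=> x [rho [hr ->]]; exact: cB.
apply/eqP; rewrite eq_le; apply/andP; split; first exact: ge_sup.
rewrite -eqf betaE; apply: sup_le.
- by move=> x [rho [hr ->]]; exists (bval S' w rho); split; [exists rho | exact: cA].
- by exists (bval (fun i => S' (f v w i)) (wv v w) rho0), rho0.
- by split => //; exists (alpha E (wv v w)).
Qed.
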